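(* Let $T$ be a tree and $(I,R)$ a crosscut pair of $T$. Then at least one of the following holds: (i) there exists a vertex $v\in I$ such that all but one vertex of $N_T(v)$ are leaves of $T$; (ii) there exists an edge $e\in R$ which is a pendant edge of $T$. In particular, if $|I|$ is maximum among all crosscut pairs $(I,R)$ of $T$, then (i) holds.
   Context: For a graph $F$, $|F|$ is its number of edges and $F-I$ the subgraph induced on $V(F)\setminus I$. The crosscut number is $\sigma(F)=\min\{|I|+|F-I| : I\text{ independent in }F\}$. A crosscut pair of a tree $T$ is a pair $(I,R)$ with $I\subseteq V(T)$ independent in $T$, $R=T-I$ (the edge set of the subgraph induced on $V(T)\setminus I$), and $|I|+|R|=\sigma(T)$. A leaf is a vertex of degree $1$; an edge $uv$ is pendant if $\min\{d_T(u),d_T(v)\}=1$. *)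

(* Defs.v *)
(* A (simple) graph is a symmetric irreflexive relation
   e : rel T on a finType T; edges are the 2-element sets {x,y} with e x y. *)
From mathcomp Require Import all_boot.
Set Implicit Arguments. Unset Strict Implicit. Unset Printing Implicit Defensive.

Section Graphs.
Variables (T : finType) (e : rel T).

Definition simple_graph := symmetric e /\ irreflexive e.

(* a cycle: a closed e-path through k >= 3 pairwise distinct vertices *)
Definition has_cycle :=
  exists (x : T) (p : seq T), [/\ 2 <= size p, path e x p, uniq (x :: p) & e (last x p) x].

Definition connected_graph := forall x y : T, connect e x y.

Definition is_tree := [/\ simple_graph, connected_graph & ~ has_cycle].

Definition induced_edges (S : {set T}) : {set {set T}} :=
  [set [set x; y] | x in S, y in S & e x y].

Definition edges : {set {set T}} := induced_edges setT.

Definition independent (I : {set T}) := [forall x in I, forall y in I, ~~ e x y].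

Definition nbhd (v : T) : {set T} := [set u | e v u].
Definition deg (v : T) := #|nbhd v|.
Definition leaf (v : T) := deg v == 1.

Definition crosscut_val (I : {set T}) := #|I| + #|induced_edges (~: I)|.

(* sigma(F) = min over independent I of |I| + |F - I| (set0 is independent) *)
Definition crosscut_number : nat :=
  \big[minn/crosscut_val set0]_(I : {set T} | independent I) crosscut_val I.

Definition crosscut_pair (I : {set T}) (R : {set {set T}}) :=
  [/\ independent I, R = induced_edges (~: I) & #|I| + #|R| = crosscut_number].

(* (i): some v in I all but (at most) one of whose neighbours are leaves *)
Definition cond_i (I : {set T}) :=
  exists2 v, v \in I & exists u, forall w, w \in nbhd v -> w != u -> leaf w.

Definition cond_ii (R : {set {set T}}) :=
  exists x y, [/\ e x y, [set x; y] \in R & leaf x || leaf y].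

End Graphs.

(* Main.v *)
Require Import Defs.
From mathcomp Require Import all_boot.
From mathcomp Require Import zify.
From Stdlib Require Import Classical.

Set Implicit Arguments. Unset Strict Implicit. Unset Printing Implicit Defensive.

Section G.
Variables (T : finType) (e : rel T).
Hypotheses (esym : symmetric e) (eirr : irreflexive e) (nocyc : ~ has_cycle e).

Lemma nochord x y p : path e x p -> uniq (x :: p) -> y \in p -> e y x ->
  y = head x p.
Proof.
move=> pa un yp eyx; case/splitPr: yp pa un => p1 p2 pa un.
case: p1 pa un => [|z p1] pa un //=.
exfalso; apply: nocyc; exists x, (rcons (z :: p1) y); split.
- by rewrite size_rcons.
- rewrite cat_path /= in pa; case/and3P: pa => pa1 pa2 _.
  by rewrite rcons_path; apply/andP; split.
- move: un; rewrite -cat_rcons -cat_cons cat_uniq; by case/and3P.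
- by rewrite last_rcons.
Qed.

Lemma uniq_size (y : T) q : uniq (y :: q) -> size q < #|T|.
Proof.
move=> /card_uniqP H; have := max_card (mem (y :: q)); rewrite H /=; done.
Qed.

Lemma exmax n x p : path e x p -> uniq (x :: p) -> #|T| - size p <= n ->
  exists x' p', [/\ path e x' p', uniq (x' :: p'), size p <= size p' &
    forall y q, path e y q -> uniq (y :: q) -> size q <= size p'].
Proof.
elim: n x p => [|n IH] x p pa un hn.
  exists x, p; split => // y q _ /uniq_size; have := uniq_size un; lia.
case: (classic (exists y q, [/\ path e y q, uniq (y :: q) & size p < size q])).
  move=> [y [q [pq uq lt]]].
  have [x' [p' [h1 h2 h3 h4]]] := IH y q pq uq ltac:(lia).
  exists x', p'; split => //; lia.
move=> H; exists x, p; split => // y q pq uq.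
rewrite leqNgt; apply/negP => lt; apply: H; by exists y, q.
Qed.

Lemma support_vertex : connected_graph e -> 1 < #|T| ->
  exists x0 x1 u, [/\ nbhd e x0 = [set x1], e x1 x0 &
    forall w, w \in nbhd e x1 -> w != u -> leaf e w].
Proof.
move=> conn /card_gt1P [a [b [_ _ ab]]].
have /connectP [p0 pa0 lb] := conn a b.
case: p0 pa0 lb => [|c p0] pa0 lb; first by move: ab; rewrite lb eqxx.
have eac : e a c by case/andP: pa0.
have ac : a != c by apply/eqP => ac; move: eac; rewrite ac eirr.
have [x0 [p [pa un sz mx]]] := @exmax #|T| a [:: c] ltac:(by rewrite /= eac)
  ltac:(by rewrite /= inE ac) ltac:(lia).
case: p pa un sz mx => [|x1 p'] pa un // _ mx.
have ex01 : e x0 x1 by case/andP: pa.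
have pa' : path e x1 p' by case/andP: pa.
have un' : uniq (x1 :: p') by case/andP: un.
have F1 : nbhd e x0 = [set x1].
  apply/setP => z; rewrite !inE; apply/idP/eqP; last by move=> ->.
  move=> ez.
  case: (boolP (z \in x0 :: x1 :: p')) => zin.
    move: zin; rewrite in_cons => /orP [/eqP zx0| zp].
      by move: ez; rewrite zx0 eirr.
    by have := nochord pa un zp ltac:(by rewrite esym).
  have := mx z (x0 :: x1 :: p') ltac:(by rewrite /= esym ez ex01 pa')
    ltac:(by rewrite cons_uniq zin un).
  by rewrite /= ltnn.
exists x0, x1, (head x1 p'); split.
- exact: F1.
- by rewrite esym.
move=> w; rewrite inE => ew wu.
case: (eqVneq w x0) => [->|wx0]; first by rewrite /leaf /deg F1 cards1.
have wnin : w \notin x0 :: x1 :: p'.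
  rewrite !in_cons (negbTE wx0) /=; apply/negP => /orP [/eqP wx1|wp].
    by move: ew; rewrite wx1 eirr.
  have := nochord pa' un' wp ltac:(by rewrite esym).
  by move=> wh; move: wu; rewrite wh eqxx.
have wnin' : w \notin x1 :: p' by move: wnin; rewrite in_cons negb_or => /andP[].
rewrite /leaf /deg; apply/eqP.
suff -> : nbhd e w = [set x1] by rewrite cards1.
apply/setP => z; rewrite !inE; apply/idP/eqP; last by move=> ->; rewrite esym.
move=> ewz; apply/eqP; case: (eqVneq z x1) => // zx1.
case: (boolP (z \in x0 :: x1 :: p')) => zin.
  move: zin; rewrite in_cons => /orP [/eqP zx0| zp].
    have : w \in nbhd e x0 by rewrite inE esym -zx0.
    by rewrite F1 inE => /eqP wx1; move: wnin; rewrite wx1 !inE eqxx orbT.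
  have := @nochord w z (x1 :: p') ltac:(by rewrite /= esym ew pa')
    ltac:(by rewrite cons_uniq wnin' un') zp ltac:(by rewrite esym).
  by move=> /= zx; move: zx1; rewrite zx eqxx.
have znin : z \notin w :: x1 :: p'.
  rewrite in_cons negb_or; apply/andP; split.
    by apply/eqP => zw; move: ewz; rewrite zw eirr.
  by move: zin; rewrite in_cons negb_or => /andP[].
have := mx z (w :: x1 :: p') ltac:(by rewrite /= esym ewz esym ew pa')
  ltac:(by rewrite cons_uniq znin cons_uniq wnin' un').
by rewrite /= ltnn.
Qed.

End G.


Lemma bigmin_le (T : finType) (P : pred T) (F : T -> nat) c j :
  P j -> \big[minn/c]_(i | P i) F i <= F j.
Proof.
move=> Pj; change (\big[minn/c]_(i <- index_enum T | P i) F i <= F j).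
have : j \in index_enum T by rewrite mem_index_enum.
elim: (index_enum T) => [|a r IH] //; rewrite inE big_cons.
case: (eqVneq j a) => [<- _|ja /= jr]; first by rewrite Pj geq_minl.
case: (P a) => /=; last exact: IH jr.
exact: leq_trans (geq_minr _ _) (IH jr).
Qed.

Lemma in_ind (T : finType) (e : rel T) (S : {set T}) (a b : T) :
  [set a; b] \in induced_edges e S -> (a \in S) && (b \in S).
Proof.
case/imset2P => c d hc; rewrite inE => /andP[hd _] eq.
have : a \in [set c; d] by rewrite -eq set21.
have : b \in [set c; d] by rewrite -eq set22.
by rewrite !inE => /orP[]/eqP-> /orP[]/eqP->; rewrite ?hc ?hd.
Qed.

Lemma ind_in (T : finType) (e : rel T) (S : {set T}) (a b : T) :
  a \in S -> b \in S -> e a b -> [set a; b] \in induced_edges e S.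
Proof.
move=> ha hb eab; apply/imset2P; exists a b => //; by rewrite inE hb.
Qed.

Lemma aux (T : finType) (e : rel T) (I : {set T}) (x y : T) :
  symmetric e -> irreflexive e ->
  independent e I -> e x y -> [set x; y] \in induced_edges e (~: I) -> leaf e x ->
  #|I| + #|induced_edges e (~: I)| = crosscut_number e ->
  crosscut_pair e (x |: I) (induced_edges e (~: (x |: I))) /\ #|x |: I| = #|I|.+1.
Proof.
move=> esym eirr indI exy xyR lx cost.
have /andP[xI yI] := in_ind xyR; rewrite !inE in xI yI.
have Nx : nbhd e x = [set y].
  move: lx; rewrite /leaf /deg => /cards1P [z hz].
  have : y \in nbhd e x by rewrite inE.
  by rewrite hz inE => /eqP ->.
have cI : #|x |: I| = #|I|.+1 by rewrite cardsU1 xI.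
have indI' : independent e (x |: I).
  apply/forallP => a; apply/implyP => ha; apply/forallP => b; apply/implyP => hb.
  rewrite !in_setU1 in ha hb.
  case/orP: ha => [/eqP->|ha]; case/orP: hb => [/eqP->|hb].
  - by rewrite eirr.
  - apply/negP => exb; have : b \in nbhd e x by rewrite inE.
    by rewrite Nx inE => /eqP bl; move: yI; rewrite -bl hb.
  - apply/negP => eax; have : a \in nbhd e x by rewrite inE esym.
    by rewrite Nx inE => /eqP bl; move: yI; rewrite -bl ha.
  - exact: (implyP (forallP (implyP (forallP indI a) ha) b) hb).
have pr : induced_edges e (~: (x |: I)) \proper induced_edges e (~: I).
  apply/properP; split.
    apply/subsetP => S /imset2P [a b ha]; rewrite inE => /andP[hb eab] ->.
    rewrite !inE !negb_or in ha hb.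
    case/andP: ha => _ ha; case/andP: hb => _ hb.
    by apply: ind_in => //; rewrite inE.
  exists [set x; y] => //; apply/negP => /in_ind; by rewrite !inE eqxx.
have le1 := proper_card pr.
have le2 : crosscut_number e <= crosscut_val e (x |: I).
  exact: bigmin_le.
move: le2; rewrite /crosscut_val cI => le2.
split => //; split => //; lia.
Qed.

Theorem proposition2p6 (T : finType) (e : rel T) :
  is_tree e -> 1 < #|T| ->
  forall (I : {set T}) (R : {set {set T}}),
    crosscut_pair e I R ->
    (cond_i e I \/ cond_ii e R) /\
    ((forall (I' : {set T}) (R' : {set {set T}}),
        crosscut_pair e I' R' -> #|I'| <= #|I|) -> cond_i e I).
Proof.
move=> [[esym eirr] conn nocyc] n2 I R [indI -> cost].
have [x0 [x1 [u [F1 e10 Hu]]]] := support_vertex esym eirr nocyc conn n2.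
have part1 : forall J : {set T}, cond_i e J \/ cond_ii e (induced_edges e (~: J)).
  move=> J; case: (boolP (x0 \in J)) => h0.
    left; exists x0 => //; exists x1 => w; rewrite F1 inE => /eqP ->.
    by rewrite eqxx.
  case: (boolP (x1 \in J)) => h1.
    by left; exists x1 => //; exists u; exact: Hu.
  right; exists x0, x1; split.
  - by rewrite esym.
  - by apply: ind_in; rewrite ?inE ?h0 ?h1 // esym.
  - by rewrite /leaf /deg F1 cards1.
split; first exact: part1.
move=> Hmax; case: (part1 I) => // [[x [y [exy xyR lf]]]].
case/orP: lf => lf.
  have [cp cI] := aux esym eirr indI exy xyR lf cost.
  by have := Hmax _ _ cp; rewrite cI ltnn.
have eyx : e y x by rewrite esym.
rewrite setUC in xyR.
have [cp cI] := aux esym eirr indI eyx xyR lf cost.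
by have := Hmax _ _ cp; rewrite cI ltnn.
Qed.
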